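(* Let $G$ be a finite simple graph. If $G$ is not a cover graph, then the direct product $G \times G$ is not a cover graph.
   Context: A graph is a cover graph if it is the underlying (undirected) graph of the Hasse diagram of some finite partially ordered set. The direct product $G \times H$ has vertex set $V(G)\times V(H)$, with $(g_i,h_s)$ adjacent to $(g_j,h_t)$ if and only if $g_ig_j \in E(G)$ and $h_sh_t \in E(H)$. *)

(* Defs.v *)
From mathcomp Require Import all_boot.
Set Implicit Arguments. Unset Strict Implicit. Unset Printing Implicit Defensive.

Definition simple_graph (T : finType) (e : rel T) : Prop :=
  symmetric e /\ irreflexive e.

Definition strict_order (T : finType) (lt : rel T) : Prop :=
  irreflexive lt /\ transitive lt.

Definition covers (T : finType) (lt : rel T) (x y : T) : bool :=
  lt x y && [forall z, ~~ (lt x z && lt z y)].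

Definition cover_graph (T : finType) (e : rel T) : Prop :=
  exists lt : rel T, strict_order lt /\
    forall x y, e x y = covers lt x y || covers lt y x.

Definition direct_prod (T U : finType) (e : rel T) (f : rel U) : rel (T * U) :=
  fun p q => e p.1 q.1 && f p.2 q.2.

(* Main.v *)
Require Import Defs.
From mathcomp Require Import all_boot.
Set Implicit Arguments. Unset Strict Implicit.

Section Aux.
Variable T : finType.
Variable lt : rel (T * T).
Hypothesis ltirr : irreflexive lt.
Hypothesis lttr : transitive lt.

Definition arc : rel T := fun x y => covers lt (x, x) (y, y).

Lemma arc_lt x y : arc x y -> lt (x, x) (y, y).
Proof. by case/andP. Qed.

Lemma path_lt y p : forall z, path arc z p -> last z p = y ->
  z = y \/ lt (z, z) (y, y).
Proof.
elim: p => [|a p IH] z /=; first by move=> _ ->; left.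
case/andP=> Hza Hp Hl; right.
have Hlt := arc_lt Hza.
case: (IH a Hp Hl) => [<- //|]; exact: lttr.
Qed.

Lemma connect_lt z y : connect arc z y -> z = y \/ lt (z, z) (y, y).
Proof. by case/connectP=> p Hp ->; apply: (path_lt Hp). Qed.

Lemma connect_step z y : connect arc z y -> z != y ->
  exists z', arc z z' && connect arc z' y.
Proof.
case/connectP=> [[|a p]] /= Hp ->; first by rewrite eqxx.
case/andP: Hp => Ha Hp _; exists a; rewrite Ha /=.
by apply/connectP; exists p.
Qed.

Definition lt' : rel T := fun x y => [exists z, arc x z && connect arc z y].

Lemma lt'_lt x y : lt' x y -> lt (x, x) (y, y).
Proof.
case/existsP=> z /andP[Hxz Hzy].
have H1 := arc_lt Hxz.
by case: (connect_lt Hzy) => [<- //|]; apply: lttr.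
Qed.

End Aux.

Theorem corollary5 (T : finType) (e : rel T) :
  simple_graph e -> ~ cover_graph e -> ~ cover_graph (direct_prod e e).
Proof.
move=> _ Hnc [lt [[irr tr] Hc]]; apply: Hnc.
exists (lt' lt); split.
  split.
    by move=> x; apply/negbTE/negP=> H; have := lt'_lt tr H; rewrite irr.
  move=> y x w /existsP[z /andP[Hxz Hzy]] /existsP[z' /andP[Hyz' Hz'w]].
  apply/existsP; exists z; rewrite Hxz /=.
  apply: connect_trans Hzy _; apply: connect_trans (connect1 Hyz') Hz'w.
have He : forall x y, e x y = arc lt x y || arc lt y x.
  by move=> x y; have := Hc (x, x) (y, y); rewrite /direct_prod /= andbb.
have Hcov : forall x y, arc lt x y -> covers (lt' lt) x y.
  move=> x y Hxy; apply/andP; split.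
    by apply/existsP; exists y; rewrite Hxy connect0.
  apply/forallP=> z; apply/negP=> /andP[H1 H2].
  have {}H1 := lt'_lt tr H1; have {}H2 := lt'_lt tr H2.
  by case/andP: Hxy => _ /forallP /(_ (z, z)); rewrite H1 H2.
have Hcov2 : forall x y, covers (lt' lt) x y -> arc lt x y.
  move=> x y /andP[/existsP[z /andP[Hxz Hzy]] /forallP Hn].
  case: (eqVneq z y) => [<- //|Hne].
  have [z' /andP[Hzz' Hz'y]] := connect_step Hzy Hne.
  have := Hn z; rewrite negb_and => /orP[] /negP []; apply/existsP.
    by exists z; rewrite Hxz connect0.
  by exists z'; rewrite Hzz' Hz'y.
move=> x y; rewrite He; apply/idP/idP.
  by case/orP=> H; apply/orP; [left|right]; apply: Hcov.
by case/orP=> H; apply/orP; [left|right]; apply: Hcov2.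
Qed.
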